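(* Let $(b,c,d)\in\bar S$. Then $(b,c,d)$ has no inverse image under $\bar M_B$ in $\bar S$ if and only if one of the following holds: (i) $b,c,d$ are neither all even nor all odd; (ii) $b,c,d$ are all even, but $c\not\equiv 0\pmod 4$ or $d\not\equiv 0\pmod 8$; (iii) $b,c,d$ are all odd, but $-2b+c\not\equiv 1\pmod 4$ or $b-c+d\not\equiv 1\pmod 8$.
   Context: $\bar S$ is the set of all $(b,c,d)\in\mathbb{Z}^3$ with $b^2-3c\le 0$, $d<0$, $1+b+c+d>0$; for $(b,c,d)\in\bar S$, $\pi(b,c,d)$ is the unique real root (in $(0,1)$) of $x^3+bx^2+cx+d$. The map $\bar M_B:\bar S\to\bar S$ is defined by: let $\alpha=\pi(b,c,d)$; if $\alpha\in(0,1/2)$ then $\bar M_B(b,c,d)=(2b,4c,8d)$, and if $\alpha\in(1/2,1)$ then $\bar M_B(b,c,d)=(2b+3,\,4b+4c+3,\,2b+4c+8d+1)$. (This is the conjugate $\pi^{-1}\circ M_B\circ\pi$ of the Bernoulli map $M_B(x)=2x\bmod 1$.) *)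

(* Defs.v *)
From Stdlib Require Import Reals ZArith ClassicalEpsilon.
Open Scope Z_scope.

Definition Sbar (t : Z * Z * Z) : Prop :=
  let '(b, c, d) := t in b ^ 2 - 3 * c <= 0 /\ d < 0 /\ 1 + b + c + d > 0.

Definition cubic (b c d : Z) (x : R) : R :=
  (x ^ 3 + IZR b * x ^ 2 + IZR c * x + IZR d)%R.

(* pi(b,c,d): the (unique) real root of the cubic, which lies in (0,1)
   for (b,c,d) in \bar S; chosen by Hilbert's epsilon. *)
Definition pi (b c d : Z) : R :=
  epsilon (inhabits 0%R) (fun x => (0 < x < 1)%R /\ cubic b c d x = 0%R).

Definition MbarB (t : Z * Z * Z) : Z * Z * Z :=
  let '(b, c, d) := t in
  if Rlt_dec (pi b c d) (1 / 2)%R then (2 * b, 4 * c, 8 * d)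
  else (2 * b + 3, 4 * b + 4 * c + 3, 2 * b + 4 * c + 8 * d + 1).

(* Main.v *)
Require Import Defs.
From Stdlib Require Import Reals ZArith.
From Stdlib Require Import Lra Lia Psatz ClassicalEpsilon Classical.
Open Scope Z_scope.

Lemma cont b c d : continuity (cubic b c d).
Proof. unfold cubic; reg. Qed.

Lemma disc_R b c : b ^ 2 - 3 * c <= 0 -> (IZR b * IZR b - 3 * IZR c <= 0)%R.
Proof.
  intro H. assert (H' : b * b - 3 * c <= 0) by nia. apply IZR_le in H'.
  rewrite minus_IZR, !mult_IZR in H'. lra.
Qed.

Lemma cubic_mono b c d x y : b ^ 2 - 3 * c <= 0 -> (x < y)%R ->
  (cubic b c d x < cubic b c d y)%R.
Proof.
  intros H Hxy. apply disc_R in H. unfold cubic.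
  set (B := IZR b) in *. set (C := IZR c) in *.
  assert (Q : (0 < y*y + x*y + x*x + B*(x+y) + C)%R).
  { assert (E : (y*y + x*y + x*x + B*(x+y) + C =
       3/4*(x+y+2*B/3)*(x+y+2*B/3) + 1/4*(x-y)*(x-y) + (C - B*B/3))%R) by field.
    rewrite E.
    assert (0 < (x-y)*(x-y))%R by (apply Rmult_neg_neg; lra).
    pose proof (Rle_0_sqr (x+y+2*B/3)). unfold Rsqr in *. lra. }
  assert (E2 : (y ^ 3 + B * y ^ 2 + C * y + IZR d - (x ^ 3 + B * x ^ 2 + C * x + IZR d)
     = (y - x) * (y*y + x*y + x*x + B*(x+y) + C))%R) by ring.
  assert (0 < y - x)%R by lra.
  pose proof (Rmult_lt_0_compat _ _ H0 Q). lra.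
Qed.

Lemma root_unique b c d x y : b ^ 2 - 3 * c <= 0 ->
  cubic b c d x = 0%R -> cubic b c d y = 0%R -> x = y.
Proof.
  intros H Hx Hy. destruct (Rtotal_order x y) as [h|[h|h]]; auto.
  - pose proof (cubic_mono b c d x y H h). lra.
  - pose proof (cubic_mono b c d y x H h). lra.
Qed.

Lemma cubic0 b c d : cubic b c d 0 = IZR d.
Proof. unfold cubic; ring. Qed.
Lemma cubic1 b c d : cubic b c d 1 = IZR (1 + b + c + d).
Proof. unfold cubic; rewrite !plus_IZR; ring. Qed.

Lemma pi_spec b c d : Sbar (b, c, d) ->
  (0 < pi b c d < 1)%R /\ cubic b c d (pi b c d) = 0%R.
Proof.
  intros [H1 [H2 H3]]. unfold pi. apply epsilon_spec.
  assert (A0 : (cubic b c d 0 < 0)%R) by (rewrite cubic0; apply IZR_lt; lia).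
  assert (A1 : (0 < cubic b c d 1)%R) by (rewrite cubic1; apply IZR_lt; lia).
  destruct (IVT (cubic b c d) 0 1 (cont b c d) Rlt_0_1 A0 A1) as [z [[Hz1 Hz2] Hz]].
  exists z. split; [|exact Hz].
  split.
  - destruct Hz1 as [h|h]; auto. subst. lra.
  - destruct Hz2 as [h|h]; auto. subst. lra.
Qed.

Lemma pi_eq b c d x : Sbar (b, c, d) -> cubic b c d x = 0%R -> pi b c d = x.
Proof.
  intros Hs Hx. destruct (pi_spec b c d Hs) as [_ Hp].
  destruct Hs as [H1 _]. eapply root_unique; eauto.
Qed.

Lemma pre_iff b c d : Sbar (b, c, d) ->
  (exists p : Z * Z * Z, Sbar p /\ MbarB p = (b, c, d)) <->
  ((Z.Even b /\ c mod 4 = 0 /\ d mod 8 = 0) \/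
   (Z.Odd b /\ (-2 * b + c) mod 4 = 1 /\ (b - c + d) mod 8 = 1)).
Proof.
  intro Hs. split.
  - intros [[[b' c'] d'] [_ HM]]. unfold MbarB in HM.
    destruct (Rlt_dec _ _);
    pose proof (f_equal (fun t => fst (fst t)) HM) as E1;
    pose proof (f_equal (fun t => snd (fst t)) HM) as E2;
    pose proof (f_equal (fun t => snd t) HM) as E3; cbn [fst snd] in E1, E2, E3;
    clear HM; subst.
    + left. split; [exists b'; lia|]. split; Z.div_mod_to_equations; lia.
    + right. split; [exists (b'+1); lia|]. split; Z.div_mod_to_equations; lia.
  - destruct (pi_spec b c d Hs) as [[G0 G1] Gr].
    set (g := pi b c d) in *.
    destruct Hs as [S1 [S2 S3]].
    intros [[[b0 Hb] [Hc Hd]] | [[b0 Hb] [Hc Hd]]].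
    + pose proof (Z.div_mod c 4 ltac:(lia)) as Ec. pose proof (Z.div_mod d 8 ltac:(lia)) as Ed.
      rewrite Hc in Ec. rewrite Hd in Ed.
      set (c0 := c / 4) in *. set (d0 := d / 8) in *. clearbody c0 d0.
      subst b. rewrite Z.add_0_r in Ec, Ed. subst c d.
      assert (D0 : b0 ^ 2 - 3 * c0 <= 0) by nia.
      assert (R0 : cubic b0 c0 d0 (g/2) = 0%R).
      { unfold cubic in *. rewrite !mult_IZR in Gr. 
        replace 0%R with (0/8)%R by field. rewrite <- Gr. field. }
      assert (P1 : 1 + b0 + c0 + d0 > 0).
      { pose proof (cubic_mono b0 c0 d0 (g/2) 1 D0 ltac:(lra)).
        rewrite cubic1 in H. apply Z.lt_gt, lt_IZR. lra. }
      assert (SP : Sbar (b0, c0, d0)) by (repeat split; lia).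
      exists (b0, c0, d0). split; auto.
      unfold MbarB. rewrite (pi_eq _ _ _ _ SP R0).
      destruct (Rlt_dec (g/2) (1/2)); [reflexivity | lra].
    + pose proof (Z.div_mod (-2 * b + c) 4 ltac:(lia)) as Ec.
      pose proof (Z.div_mod (b - c + d) 8 ltac:(lia)) as Ed.
      rewrite Hc in Ec. rewrite Hd in Ed.
      set (q := (-2 * b + c) / 4) in *. set (r := (b - c + d) / 8) in *. clearbody q r.
      assert (Ec' : c = 4 * q + 1 + 2 * b) by lia.
      assert (Ed' : d = 8 * r + 1 - b + c) by lia.
      clear Ec Ed Hc Hd.
      set (b' := b0 - 1). set (c' := q + 1). set (d' := r).
      assert (Eb : b = 2 * b' + 3) by (unfold b'; lia).
      assert (Ec2 : c = 4 * b' + 4 * c' + 3) by (unfold b', c'; lia).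
      assert (Ed2 : d = 2 * b' + 4 * c' + 8 * d' + 1) by (unfold b', c', d'; lia).
      clearbody b' c' d'. clear Ec' Ed' Hb. subst b c d.
      assert (D0 : b' ^ 2 - 3 * c' <= 0) by nia.
      assert (R0 : cubic b' c' d' ((g+1)/2) = 0%R).
      { unfold cubic in *. rewrite !plus_IZR, !mult_IZR in Gr.
        replace 0%R with (0/8)%R by field. rewrite <- Gr. field. }
      assert (P1 : 1 + b' + c' + d' > 0).
      { pose proof (cubic_mono b' c' d' ((g+1)/2) 1 D0 ltac:(lra)).
        rewrite cubic1 in H. apply Z.lt_gt, lt_IZR. lra. }
      assert (P0 : d' < 0).
      { pose proof (cubic_mono b' c' d' 0 ((g+1)/2) D0 ltac:(lra)).
        rewrite cubic0 in H. apply lt_IZR. lra. }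
      assert (SP : Sbar (b', c', d')) by (repeat split; lia).
      exists (b', c', d'). split; auto.
      unfold MbarB. rewrite (pi_eq _ _ _ _ SP R0).
      destruct (Rlt_dec ((g+1)/2) (1/2)); [lra | reflexivity].
Qed.

Theorem fact2 (b c d : Z) (Hs : Sbar (b, c, d)) :
  (~ exists p : Z * Z * Z, Sbar p /\ MbarB p = (b, c, d)) <->
  ( (* (i) neither all even nor all odd *)
    ~ ((Z.Even b /\ Z.Even c /\ Z.Even d) \/ (Z.Odd b /\ Z.Odd c /\ Z.Odd d))
  \/ (* (ii) *)
    ((Z.Even b /\ Z.Even c /\ Z.Even d) /\ (c mod 4 <> 0 \/ d mod 8 <> 0))
  \/ (* (iii) *)
    ((Z.Odd b /\ Z.Odd c /\ Z.Odd d) /\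
     ((-2 * b + c) mod 4 <> 1 \/ (b - c + d) mod 8 <> 1))).
Proof.
  rewrite (pre_iff b c d Hs).
  assert (EO : forall x, Z.Even x -> Z.Odd x -> False).
  { intros x [k Hk] [l Hl]. lia. }
  split.
  - intro N.
    destruct (classic (Z.Even b /\ Z.Even c /\ Z.Even d)) as [E|E].
    + right; left. split; auto.
      destruct (Z.eq_dec (c mod 4) 0); destruct (Z.eq_dec (d mod 8) 0); auto.
      exfalso. apply N. left. tauto.
    + destruct (classic (Z.Odd b /\ Z.Odd c /\ Z.Odd d)) as [O|O].
      * right; right. split; auto.
        destruct (Z.eq_dec ((-2 * b + c) mod 4) 1);
          destruct (Z.eq_dec ((b - c + d) mod 8) 1); auto.
        exfalso. apply N. right. tauto.
      * left. tauto.
  - intros H [[Eb [Hc Hd]] | [Ob [Hc Hd]]].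
    + assert (Z.Even c /\ Z.Even d) as [Ec Ed].
      { split; [exists (2 * (c / 4)) | exists (4 * (d / 8))];
        Z.div_mod_to_equations; lia. }
      destruct H as [H|[H|H]].
      * apply H. left. tauto.
      * tauto.
      * destruct H as [[Ob _] _]. eauto.
    + destruct Ob as [k Hk].
      assert (Z.Odd c /\ Z.Odd d) as [Oc Od].
      { split; [exists (2 * ((-2*b+c) / 4) + 2*k+1) | exists (4 * ((b-c+d) / 8) + 2 * ((-2*b+c) / 4) + k + 1)];
        Z.div_mod_to_equations; lia. }
      assert (Ob : Z.Odd b) by (exists k; exact Hk).
      destruct H as [H|[H|H]].
      * apply H. right. tauto.
      * destruct H as [[Eb _] _]. eauto.
      * tauto.
Qed.
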